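(* Let $N\ge 1$, $i\in\langle N\rangle$ and let $u$ be a word over $\langle N\rangle$ with $|u|\ge 2$. Then the antipode $S_{\mathcal L}$ of the left Lagrange Hopf algebra $\mathcal L^N$ satisfies \[ S_{\mathcal L}(Y_u^i)=\sum_{T\in \mathbf{RT}_u^i}(-1)^{\mathbf v(T)}\,\Lambda_{\downarrow\ell}(T). \]
   Context: Let $\langle N\rangle=\{1,\dots,N\}$. For a word $u=u(1)\cdots u(p)$ over $\langle N\rangle$ write $|u|=p$. The interval partition Hopf algebra $\mathcal H=\mathcal H^N$ is, as an algebra, the free unital associative complex algebra on generators $Y_u^i$ ($i\in\langle N\rangle$, $|u|\ge 2$); one sets $Y_j^i=\delta_{ij}1$ for single letters $i,j$. Its counit $\varepsilon$ is the algebra homomorphism with $\varepsilon(Y_u^i)=0$, and its comultiplication is the algebra homomorphism $\Delta:\mathcal H\to\mathcal H\otimes\mathcal H$ with $\Delta(Y_u^i)=\sum_{q=1}^{p}\sum_{(C_1,\dots,C_q)}\sum_{v\in\langle N\rangle^q} Y_{u|C_1}^{v(1)}\cdots Y_{u|C_q}^{v(q)}\otimes Y_v^i$, where $p=|u|$, the middle sum is over all partitions of $\{1,\dots,p\}$ into $q$ nonempty consecutive intervals $C_1<\dots<C_q$, and $u|C_k$ is the subword of $u$ indexed by $C_k$. This is a connected graded bialgebra and has an invertible antipode $S_{\mathcal H}$. The left Lagrange Hopf algebra $\mathcal L^N$ is $\mathcal H$ with the same multiplication and counit, the opposite comultiplication $\Delta^{op}=\tau\circ\Delta$ ($\tau$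 the flip), and antipode $S_{\mathcal L}=S_{\mathcal H}^{-1}$. Trees: a colored planar tree is a finite rooted tree in which the children of each vertex are linearly ordered (left to right) and each vertex $x$ has a color $c(x)\in\langle N\rangle$; trees are taken up to isomorphism preserving root, child orders and colors. A leaf is a vertex with no children. A tree is reduced if every non-leaf vertex has at least two children. $\mathbf{RT}_u^i$ is the set of reduced colored planar trees whose root has color $i$ and whose leaves, read from left to right, have colors $u(1),\dots,u(p)$. For a non-leaf vertex $x$ with children $y_1<\dots<y_k$ put $Y(x)=Y^{c(x)}_{c(y_1)\cdots c(y_k)}\in\mathcal H$. $\mathbf v(T)$ is the number of non-leaf vertices of $T$. $\Lambda_{\downarrow\ell}(T)=Y(x_1)\cdots Y(x_r)$ where $x_1,\dots,x_r$ are the non-leaf vertices of $T$ listed in preorder with children visited from right to left (the root first; after a vertex, the subtrees of its children are traversed from the rightmost child to the leftmost child). (In the paper this is the descending left depth-first order.) *)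

(* Defs.v *)
From HB Require Import structures.
From mathcomp Require Import all_boot all_order all_algebra.
From mathcomp Require Import reals.
From mathcomp Require Import complex.
From Stdlib Require List.

Set Implicit Arguments.
Unset Strict Implicit.
Unset Printing Implicit Defensive.
Import GRing.Theory Num.Theory.
Local Open Scope ring_scope.

Section IntervalPartitionHopf.
Variable N : nat.
Variable K : comPzRingType.

(* Generators Y_u^i with i a color and u a word of length >= 2.
   Colors <N> = {1..N} are represented by 'I_N. *)
Definition gen := {x : 'I_N * seq 'I_N | (1 < size x.2)%N}.

Definition monomial := seq gen.

(* Elements of H are represented by their coefficient functions on monomials
   (only finitely supported ones are genuine elements, but the product below is
   well defined for all coefficient functions, since a word has finitely many
   factorizations). *)
Definition Hel := monomial -> K.

Definition Hone : Hel := fun w => (w == [::])%:R.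
Definition Hmono (m : monomial) : Hel := fun w => (w == m)%:R.
Definition Hmul (f g : Hel) : Hel :=
  fun w => \sum_(k < (size w).+1) f (take k w) * g (drop k w).

Definition ET := seq (K * monomial).
Definition ETval (l : ET) : Hel := fun w => \sum_(x <- l) x.1 * (x.2 == w)%:R.
Definition ETmul (a b : ET) : ET := [seq (x.1 * y.1, x.2 ++ y.2) | x <- a, y <- b].
Definition ETprod (l : seq ET) : ET := foldr ETmul [:: (1, [::])] l.

(* Y_u^i as an element of H: the generator if |u| >= 2, delta_{ij} 1 if u = j
   is a single letter (and 0 for the empty word, which never occurs). *)
Definition Yterms (i : 'I_N) (u : seq 'I_N) : ET :=
  match insub (i, u) : option gen with
  | Some g => [:: (1, [:: g])]
  | None => if u == [:: i] then [:: (1, [::])] else [::]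
  end.

(* All partitions of the positions of u into nonempty consecutive intervals
   C_1 < ... < C_q, given by the list of subwords [u|C_1; ...; u|C_q]. *)
Fixpoint interval_partitions (T : Type) (u : seq T) : seq (seq (seq T)) :=
  match u with
  | [::] => [:: [::]]
  | x :: u' =>
      flatten [seq match bs with
                   | [::] => [:: [:: [:: x]]]
                   | b :: bs' => [:: [:: x] :: b :: bs'; (x :: b) :: bs']
                   end | bs <- interval_partitions u']
  end.

Definition TT := seq (K * monomial * monomial).
Definition TTmul (s t : TT) : TT :=
  [seq (x.1.1 * y.1.1, x.1.2 ++ y.1.2, x.2 ++ y.2) | x <- s, y <- t].

(* Delta(Y_u^i) = sum_q sum_{(C_1..C_q)} sum_{v in <N>^q}
                  Y_{u|C_1}^{v(1)} ... Y_{u|C_q}^{v(q)} (x) Y_v^i *)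
Definition Delta_gen (g : gen) : TT :=
  let i := (val g).1 in let u := (val g).2 in
  flatten [seq
    flatten [seq [seq (x.1 * y.1, x.2, y.2)
                 | x <- ETprod [seq Yterms p.1 p.2 | p <- zip (val v) bs],
                   y <- Yterms i (val v)]
            | v : (size bs).-tuple 'I_N]
  | bs <- interval_partitions u].

Definition Delta (m : monomial) : TT := foldr TTmul [:: (1, [::], [::])] (map Delta_gen m).

Definition eps (m : monomial) : K := (m == [::])%:R.

(* S (given on the monomial basis, extended linearly) is an antipode of the left
   Lagrange Hopf algebra L^N = (H, m, Delta^op, eps): for every monomial m with
   Delta(m) = sum c a (x) b, i.e. Delta^op(m) = sum c b (x) a,
     sum c S(b) a = eps(m) 1 = sum c b S(a). *)
Definition is_antipode_L (S : monomial -> Hel) : Prop :=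
  forall m w,
    \sum_(t <- Delta m) t.1.1 * Hmul (S t.2) (Hmono t.1.2) w = eps m * Hone w /\
    \sum_(t <- Delta m) t.1.1 * Hmul (Hmono t.2) (S t.1.2) w = eps m * Hone w.

(* Colored planar rooted trees: a vertex of color c with an ordered list of
   children. Leibniz equality of terms is isomorphism of colored planar trees. *)
Inductive tree := Node of 'I_N & seq tree.

Definition root_color (t : tree) : 'I_N := let: Node c _ := t in c.

Fixpoint leaves (t : tree) : seq 'I_N :=
  match t with
  | Node c [::] => [:: c]
  | Node _ ts => flatten (map leaves ts)
  end.

Fixpoint reduced (t : tree) : bool :=
  match t with
  | Node _ ts => ((nilp ts) || (1 < size ts)%N) && all reduced ts
  end.

Fixpoint nvert (t : tree) : nat :=
  match t with
  | Node _ [::] => 0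
  | Node _ ts => (sumn (map nvert ts)).+1
  end.

(* Lambda_{down l}(T) = Y(x_1) ... Y(x_r), x_1..x_r the non-leaf vertices in
   preorder, root first, children subtrees traversed from right to left. *)
Fixpoint Lambda (t : tree) : ET :=
  match t with
  | Node _ [::] => [:: (1, [::])]
  | Node c ts => ETmul (Yterms c (map root_color ts)) (ETprod (rev (map Lambda ts)))
  end.

Definition inRT (i : 'I_N) (u : seq 'I_N) (t : tree) : Prop :=
  reduced t /\ root_color t = i /\ leaves t = u.

End IntervalPartitionHopf.

(* Main.v *)
Require Import Defs.
From HB Require Import structures.
From mathcomp Require Import all_boot all_order all_algebra.
From mathcomp Require Import reals.
From mathcomp Require Import complex.
From mathcomp Require Import ring zify.
From Stdlib Require List FunctionalExtensionality.
Import GRing.Theory Num.Theory.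
Local Open Scope ring_scope.
Set Implicit Arguments.
Unset Strict Implicit.
Unset Printing Implicit Defensive.

Section Alg.
Variable N : nat.
Variable K : comPzRingType.
Local Notation Hel := (Hel N K).
Local Notation monomial := (monomial N).
Local Notation ET := (ET N K).
Local Notation One := (@Hone N K).

Lemma funext (A B : Type) (f g : A -> B) : (forall x, f x = g x) -> f = g.
Proof. exact: FunctionalExtensionality.functional_extensionality. Qed.

Definition shift (f : Hel) (x : gen N) : Hel := fun w => f (x :: w).

Lemma Hmul_nil (f g : Hel) : Hmul f g [::] = f [::] * g [::].
Proof. by rewrite /Hmul big_ord_recl big_ord0 addr0. Qed.

Lemma Hmul_cons (f g : Hel) x w :
  Hmul f g (x :: w) = f [::] * g (x :: w) + Hmul (shift f x) g w.
Proof. by rewrite /Hmul big_ord_recl. Qed.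

Definition Hadd (f g : Hel) : Hel := fun w => f w + g w.
Definition Hscale (c : K) (f : Hel) : Hel := fun w => c * f w.
Definition Hsum (X : Type) (s : seq X) (F : X -> Hel) : Hel :=
  fun w => \sum_(x <- s) F x w.
Definition H0 : Hel := fun w => 0.

Lemma HmulDl (f1 f2 g : Hel) : Hmul (Hadd f1 f2) g = Hadd (Hmul f1 g) (Hmul f2 g).
Proof. apply: funext => w; rewrite /Hmul /Hadd -big_split /=.
by apply: eq_bigr => k _; rewrite mulrDl. Qed.
Lemma HmulDr (f g1 g2 : Hel) : Hmul f (Hadd g1 g2) = Hadd (Hmul f g1) (Hmul f g2).
Proof. apply: funext => w; rewrite /Hmul /Hadd -big_split /=.
by apply: eq_bigr => k _; rewrite mulrDr. Qed.
Lemma HmulZl c (f g : Hel) : Hmul (Hscale c f) g = Hscale c (Hmul f g).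
Proof. apply: funext => w; rewrite /Hmul /Hscale mulr_sumr.
by apply: eq_bigr => k _; rewrite mulrA. Qed.
Lemma HmulZr c (f g : Hel) : Hmul f (Hscale c g) = Hscale c (Hmul f g).
Proof. apply: funext => w; rewrite /Hmul /Hscale mulr_sumr.
by apply: eq_bigr => k _; rewrite mulrCA. Qed.
Lemma HmulSl (X : Type) (s : seq X) (F : X -> Hel) (g : Hel) :
  Hmul (Hsum s F) g = Hsum s (fun x => Hmul (F x) g).
Proof. apply: funext => w; rewrite /Hmul /Hsum.
under eq_bigr do rewrite mulr_suml. exact: exchange_big. Qed.
Lemma HmulSr (X : Type) (s : seq X) (f : Hel) (G : X -> Hel) :
  Hmul f (Hsum s G) = Hsum s (fun x => Hmul f (G x)).
Proof. apply: funext => w; rewrite /Hmul /Hsum.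
under eq_bigr do rewrite mulr_sumr. exact: exchange_big. Qed.

Lemma HmulA (f g h : Hel) : Hmul (Hmul f g) h = Hmul f (Hmul g h).
Proof.
apply: funext => w; elim: w f g h => [|x w IH] f g h.
  by rewrite !Hmul_nil mulrA.
rewrite !Hmul_cons !Hmul_nil.
have -> : shift (Hmul f g) x = Hadd (Hscale (f [::]) (shift g x)) (Hmul (shift f x) g).
  by apply: funext => w'; rewrite /shift /Hadd /Hscale Hmul_cons.
rewrite HmulDl HmulZl /Hadd /Hscale IH mulrDr !addrA mulrA.
by [].
Qed.

Lemma Hmul1l (f : Hel) : Hmul One f = f.
Proof. apply: funext => w; case: w => [|x w]; first by rewrite Hmul_nil /Hone mul1r.
rewrite Hmul_cons /Hone /= mul1r.
suff -> : Hmul (shift (fun w => (w == [::])%:R) x) f w = 0 by rewrite addr0.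
by rewrite /Hmul big1 // => k _; rewrite /shift /= mul0r. Qed.

Lemma Hmul1r (f : Hel) : Hmul f One = f.
Proof. apply: funext => w; elim: w f => [|x w IH] f; first by rewrite Hmul_nil /Hone mulr1.
rewrite Hmul_cons IH /Hone /= mulr0 add0r //. Qed.


Lemma HmulZ0l (g : Hel) : Hmul H0 g = H0.
Proof. by apply: funext => w; rewrite /Hmul big1 // => k _; rewrite /H0 mul0r. Qed.

Lemma Hmul_mono_l (a : monomial) (g : Hel) w :
  Hmul (Hmono K a) g w = if take (size a) w == a then g (drop (size a) w) else 0.
Proof.
elim: a w g => [|x a IH] w g.
  have -> : Hmono K [::] = One by apply: funext => v.
  by rewrite Hmul1l take0 drop0 eqxx.
case: w => [|y w]; first by rewrite Hmul_nil /Hmono /= mul0r.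
rewrite Hmul_cons /Hmono /= mul0r add0r.
case: (eqVneq y x) => [->|nyx].
  have -> : shift (fun w0 : monomial => (w0 == x :: a)%:R) x = Hmono K a.
    by apply: funext => v; rewrite /shift /Hmono eqseq_cons eqxx.
  by rewrite IH eqseq_cons eqxx.
have -> : shift (fun w0 : monomial => (w0 == x :: a)%:R) y = H0.
  by apply: funext => v; rewrite /shift /H0 eqseq_cons (negbTE nyx).
by rewrite HmulZ0l eqseq_cons (negbTE nyx).
Qed.

Lemma eq_cat_split (T : eqType) (w a b : seq T) :
  (w == a ++ b) = (take (size a) w == a) && (drop (size a) w == b).
Proof.
apply/eqP/andP => [->|[/eqP h1 /eqP h2]]; first by rewrite take_size_cat // drop_size_cat.
by rewrite -(cat_take_drop (size a) w) h1 h2.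
Qed.

Lemma Hmul_mono (a b : monomial) : Hmul (Hmono K a) (Hmono K b) = Hmono K (a ++ b).
Proof.
apply: funext => w; rewrite Hmul_mono_l /Hmono eq_cat_split.
by case: (take _ _ == a).
Qed.

Lemma ETvalE (l : ET) : ETval l = Hsum l (fun x => Hscale x.1 (Hmono K x.2)).
Proof. by apply: funext => w; rewrite /ETval /Hsum /Hscale /Hmono; apply: eq_bigr => x _; rewrite eq_sym. Qed.

Lemma ETval_mul (A B : ET) : ETval (ETmul A B) = Hmul (ETval A) (ETval B).
Proof.
rewrite !ETvalE HmulSl; apply: funext => w.
rewrite /Hsum /ETmul big_allpairs_dep /=; apply: eq_bigr => x _.
rewrite HmulSr /Hsum; apply: eq_bigr => y _.
rewrite HmulZl HmulZr Hmul_mono /Hscale. ring.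
Qed.

Definition prodH (fs : seq Hel) : Hel := foldr (@Hmul N K) One fs.

Lemma prodH_cat s1 s2 : prodH (s1 ++ s2) = Hmul (prodH s1) (prodH s2).
Proof. elim: s1 => [|f s1 IH] /=; first by rewrite Hmul1l. by rewrite IH HmulA. Qed.

Lemma ETval_one : ETval [:: (1, [::])] = One.
Proof. by apply: funext => w; rewrite /ETval big_cons big_nil addr0 mul1r /Hone eq_sym. Qed.

Lemma ETval_prod (Ls : seq ET) : ETval (ETprod Ls) = prodH (map (@ETval N K) Ls).
Proof. elim: Ls => [|L Ls IH] /=; first exact: ETval_one.
by rewrite /ETprod /= ETval_mul -IH. Qed.

Definition ETscale (c : K) (A : ET) : ET := [seq (c * x.1, x.2) | x <- A].

Lemma ETval_scale c A : ETval (ETscale c A) = Hscale c (ETval A).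
Proof. apply: funext => w; rewrite /ETval /ETscale big_map /Hscale mulr_sumr.
by apply: eq_bigr => x _; rewrite mulrA. Qed.

Lemma ETval_cat (A B : ET) : ETval (A ++ B) = Hadd (ETval A) (ETval B).
Proof. by apply: funext => w; rewrite /ETval big_cat. Qed.

Lemma ETval_flatten (Ls : seq ET) : ETval (flatten Ls) = Hsum Ls (@ETval N K).
Proof. by apply: funext => w; rewrite /ETval /Hsum big_flatten. Qed.

Lemma HsumE (X : Type) (s : seq X) F w : Hsum s F w = \sum_(x <- s) F x w.
Proof. by []. Qed.

End Alg.

Local Close Scope ring_scope.

Fixpoint tree_ind' (N : nat) (P : tree N -> Prop)
  (H : forall c ts, List.Forall P ts -> P (Node c ts)) (t : tree N) {struct t} : P t :=
  match t with Node c ts => H c ts ((fix F (l : seq (tree N)) : List.Forall P l :=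
     match l with [::] => List.Forall_nil P
     | a :: l' => @List.Forall_cons _ P a l' (tree_ind' H a) (F l') end) ts) end.

Fixpoint encode (N : nat) (t : tree N) : GenTree.tree 'I_N :=
  match t with Node c ts => GenTree.Node 0 (GenTree.Leaf c :: map (@encode N) ts) end.

Lemma encode_inj N : injective (@encode N).
Proof.
move=> t1; elim/tree_ind': t1 => c ts IH [c2 ts2] /= [-> E]; congr Node.
elim: ts IH ts2 E => [|t ts IHs] IH [|t2 ts2] //= [E1 E2].
move/List.Forall_cons_iff: IH => [H1 H2].
by rewrite (H1 _ E1) (IHs H2 _ E2).
Qed.

HB.instance Definition _ (N : nat) := Equality.copy (tree N) (inj_type (@encode_inj N)).


Section IP.
Variable T : eqType.

Lemma IP_mem1 (u : seq T) bs : bs \in interval_partitions u ->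
  flatten bs = u /\ all (fun b => b != [::]) bs.
Proof.
elim: u bs => [|x u IH] bs /=; first by rewrite inE => /eqP ->.
case/flatten_mapP => bs' /IH [E A].
case: bs' E A => [|b bs''] E A; first by rewrite inE => /eqP -> /=; rewrite -E.
move: A => /= /andP [nb A].
by rewrite !inE => /orP [] /eqP -> /=; rewrite -E /= ?nb A; case: b {E} nb.
Qed.

Lemma IP_mem2 (u : seq T) bs : flatten bs = u -> all (fun b => b != [::]) bs ->
  bs \in interval_partitions u.
Proof.
elim: u bs => [|x u IH] bs.
  case: bs => [|b bs]; first by rewrite inE.
  by case: b.
case: bs => [|[|y b0] rest] //=.
case=> -> E A; apply/flatten_mapP.
case: b0 E => [|z b0] /= E.
  exists rest; first exact: IH.
  by case: rest {E A} => [|b r]; rewrite !inE ?eqxx ?orbT.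
exists ((z :: b0) :: rest); first by apply: IH => //=; rewrite A.
by rewrite !inE eqxx orbT.
Qed.

End IP.

Lemma uniq_flatten_key (A B C : eqType) (s : seq A) (F : A -> seq B)
  (h : A -> C) (key : B -> C) :
  uniq (map h s) -> (forall a, a \in s -> uniq (F a)) ->
  (forall a z, a \in s -> z \in F a -> key z = h a) ->
  uniq (flatten (map F s)).
Proof.
elim: s => [|a s IH] //= /andP [nh uh] UF KF.
rewrite cat_uniq UF ?mem_head // IH //; last first.
- by move=> a' z a's; apply: KF; rewrite inE a's orbT.
- by move=> a' a's; apply: UF; rewrite inE a's orbT.
rewrite andbT; apply/hasPn => z /flatten_mapP [a' a's zF] ; apply/negP => zFa.
have E1 := KF a z (mem_head _ _) zFa.
have E2 : key z = h a' by apply: KF zF; rewrite inE a's orbT.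
by move: nh; rewrite -E1 E2 map_f.
Qed.

Definition IPback (T : Type) (bs : seq (seq T)) : seq (seq T) :=
  match bs with
  | (x :: b) :: r => if b is [::] then r else b :: r
  | _ => [::]
  end.

Lemma IP_uniq (T : eqType) (u : seq T) : uniq (interval_partitions u).
Proof.
elim: u => [|x u IH] //=.
apply: (@uniq_flatten_key _ _ _ _ _ id (@IPback T)); rewrite ?map_id //.
  move=> [|b bs] Hin //=; rewrite andbT inE.
  have [_ /andP [nb _]] := IP_mem1 Hin; case: b nb {Hin} => // y b _.
  by rewrite !eqseq_cons eqxx.
move=> [|b bs] z Hin /=; first by rewrite inE => /eqP ->.
have [_ /andP [nb _]] := IP_mem1 Hin.
by rewrite !inE => /orP [] /eqP -> //=; case: b {Hin} nb.
Qed.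

Definition cart (A : Type) (Ls : seq (seq A)) : seq (seq A) :=
  foldr (fun L acc => [seq t :: ts | t <- L, ts <- acc]) [:: [::]] Ls.

Lemma mem_cart (A : eqType) (Ls : seq (seq A)) ts :
  (ts \in cart Ls) = all2 (fun t L => t \in L) ts Ls.
Proof.
elim: Ls ts => [|L Ls IH] [|t ts] //=.
- by apply/allpairsP => [[p [_ _]]].
apply/allpairsP/andP => [[p [p1 p2 [-> ->]]]|[tL tsL]].
  by split => //; rewrite -IH.
by exists (t, ts); split => //; rewrite IH.
Qed.

Lemma uniq_cart (A : eqType) (Ls : seq (seq A)) :
  (forall L, L \in Ls -> uniq L) -> uniq (cart Ls).
Proof.
elim: Ls => [|L Ls IH] //= UL.
apply: allpairs_uniq.
- by apply: UL; rewrite mem_head.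
- by apply: IH => L' HL'; apply: UL; rewrite inE HL' orbT.
by move=> [a b] [c d] _ _ /= [-> ->].
Qed.

Lemma all2_map_r (A B C : Type) (r : A -> B -> bool) (f : C -> B) s zs :
  all2 r s (map f zs) = all2 (fun a z => r a (f z)) s zs.
Proof. by elim: s zs => [|a s IH] [|z zs] //=; rewrite IH. Qed.

Lemma eq_in_all2 (A : Type) (B : eqType) (r1 r2 : A -> B -> bool) s zs :
  (forall a z, z \in zs -> r1 a z = r2 a z) -> all2 r1 s zs = all2 r2 s zs.
Proof.
elim: s zs => [|a s IH] [|z zs] //= H.
by rewrite H ?mem_head // IH // => a' z' Hz; apply: H; rewrite inE Hz orbT.
Qed.

Lemma mem_zip2 (A B : eqType) (s : seq A) (t : seq B) p : p \in zip s t -> p.2 \in t.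
Proof.
elim: s t => [|a s IH] [|b t] //=; rewrite inE => /orP [/eqP -> |/IH H].
  by rewrite eqxx.
by rewrite H orbT.
Qed.

Lemma size_mem_flatten (T : eqType) (bs : seq (seq T)) b :
  b \in bs -> (size b <= size (flatten bs))%N.
Proof.
elim: bs => [|b0 bs IH] //=; rewrite inE size_cat => /orP [/eqP -> |/IH H].
  exact: leq_addr.
exact: leq_trans H (leq_addl _ _).
Qed.

Lemma size_block_lt (T : eqType) (bs : seq (seq T)) b :
  b \in bs -> all (fun b => b != [::]) bs -> (1 < size bs)%N ->
  (size b < size (flatten bs))%N.
Proof.
case: bs => [|b0 [|b1 r]] //= Hb /and3P [n0 n1 _] _.
rewrite size_cat size_cat.
move: Hb; rewrite inE => /orP [/eqP ->|Hb].
  by rewrite -addn1 leq_add2l addn_gt0 lt0n size_eq0 n1.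
have := size_mem_flatten Hb; rewrite /= size_cat => H.
by apply: leq_trans (_ : size b1 + size (flatten r) < _)%N; rewrite // -add1n leq_add2r lt0n size_eq0.
Qed.

Lemma size_flatten_ge (T : eqType) (bs : seq (seq T)) :
  all (fun b => b != [::]) bs -> (size bs <= size (flatten bs))%N.
Proof.
elim: bs => [|b bs IH] //= /andP [nb /IH H]; rewrite size_cat.
by rewrite -add1n leq_add // lt0n size_eq0.
Qed.

Section Trees.
Variable N : nat.
Local Notation tree := (tree N).

Fixpoint enumR (n : nat) (c : 'I_N) (u : seq 'I_N) {struct n} : seq tree :=
  match n with
  | 0 => [::]
  | n'.+1 =>
    if u is [:: x] then (if x == c then [:: Node c [::]] else [::]) else
    flatten [seq flatten [seq [seq Node c ts | ts <- cart [seq enumR n' p.1 p.2 | p <- zip (val v) bs]]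
                         | v : (size bs).-tuple 'I_N]
            | bs <- [seq bs <- interval_partitions u | (1 < size bs)%N]]
  end.

Definition enumS (n : nat) (c : 'I_N) (u : seq 'I_N) : seq tree :=
    flatten [seq flatten [seq [seq Node c ts | ts <- cart [seq enumR n p.1 p.2 | p <- zip (val v) bs]]
                         | v : (size bs).-tuple 'I_N]
            | bs <- [seq bs <- interval_partitions u | (1 < size bs)%N]].

Lemma enumR_S n c u : size u != 1%N -> enumR n.+1 c u = enumS n c u.
Proof. by case: u => [|x [|y u]]. Qed.

Lemma enumR_1 n c x : enumR n.+1 c [:: x] = if x == c then [:: Node c [::]] else [::].
Proof. by []. Qed.

Lemma enumR_nil n c : enumR n c [::] = [::].
Proof. by case: n. Qed.

Definition inRTb (c : 'I_N) (u : seq 'I_N) (t : tree) : bool :=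
  [&& reduced t, root_color t == c & leaves t == u].

Lemma inRTbP c u t : reflect (inRT c u t) (inRTb c u t).
Proof.
by apply: (iffP and3P) => [[H1 /eqP H2 /eqP H3]|[H1 [H2 H3]]]; do ?split; rewrite // ?H2 ?H3.
Qed.

Lemma leaves_nonempty (t : tree) : leaves t != [::].
Proof.
elim/tree_ind': t => c [|t ts] //= IH.
by move/List.Forall_cons_iff: IH => [H1 _]; case: (leaves t) H1.
Qed.

Lemma leavesE c ts : leaves (Node c ts) = if ts is [::] then [:: c] else flatten (map (@leaves N) ts).
Proof. by case: ts. Qed.

Lemma all2_zipE (ts : seq tree) (v : seq 'I_N) bs : size v = size bs ->
  all2 (fun t p => inRTb p.1 p.2 t) ts (zip v bs) =
  [&& map (@root_color N) ts == v, map (@leaves N) ts == bs & all (@reduced N) ts].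
Proof.
elim: ts v bs => [|t ts IH] [|x v] [|b bs] //= [E].
rewrite IH // /inRTb !eqseq_cons.
by case: (reduced t); case: (root_color t == x); case: (leaves t == b); rewrite /= ?andbF.
Qed.


Lemma sub_all2 (A B : Type) (r1 r2 : A -> B -> bool) s t :
  (forall a b, r1 a b -> r2 a b) -> all2 r1 s t -> all2 r2 s t.
Proof. move=> H; elim: s t => [|a s IH] [|b t] //= /andP [/H -> /IH] //. Qed.

Lemma cart_sound n (v : seq 'I_N) bs ts :
  (forall c u t, t \in enumR n c u -> inRTb c u t) -> size v = size bs ->
  ts \in cart [seq enumR n p.1 p.2 | p <- zip v bs] ->
  [&& map (@root_color N) ts == v, map (@leaves N) ts == bs & all (@reduced N) ts].
Proof.
move=> IH E; rewrite mem_cart all2_map_r -all2_zipE //.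
by apply: sub_all2 => t p /IH.
Qed.

Lemma enumR_sound n c u t : t \in enumR n c u -> inRTb c u t.
Proof.
elim: n c u t => [|n IH] c u t //.
case: (eqVneq (size u) 1%N) => Hs.
  case: u Hs => [|x [|y u]] // _; rewrite enumR_1.
  case: (eqVneq x c) => [->|] //; rewrite inE => /eqP ->.
  by rewrite /inRTb /= !eqxx.
rewrite enumR_S // => /flatten_mapP [bs]; rewrite mem_filter => /andP [Hsz HIP].
case/flatten_mapP => v _ /mapP [ts Hts ->].
have /and3P [/eqP Hr /eqP Hl Hred] := cart_sound IH (size_tuple v) Hts.
have [Hf _] := IP_mem1 HIP.
have Hts2 : (1 < size ts)%N by rewrite -(size_map (@leaves N)) Hl.
rewrite /inRTb /= Hred eqxx orbC Hts2 /=.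
by case: ts Hts Hl Hts2 {Hr Hred} => // t0 ts _ Hl' _; rewrite Hl' Hf.
Qed.

Lemma enumR_complete n c u t : (size u <= n)%N -> inRTb c u t -> t \in enumR n c u.
Proof.
elim: n c u t => [|n IH] c u t.
  rewrite leqn0 size_eq0 => /eqP ->.
  by rewrite /inRTb (negbTE (leaves_nonempty t)) !andbF.
move=> Hsu; case: t => c' ts /and3P [Hred /eqP Hc /eqP Hl].
simpl in Hc, Hl; subst c'.
have Hred' := Hred; simpl in Hred'; move: Hred' => /andP [Hts Hall].
case: (eqVneq ts [::]) => [E|Hne].
  by subst ts; rewrite -Hl /= eqxx inE.
have Hts2 : (1 < size ts)%N by move: Hts; case: ts Hne {Hl Hall Hred}.
have Hf : flatten (map (@leaves N) ts) = u.
  by move: Hl; case: ts Hne {Hts Hall Hred Hts2}.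
have Hne' : all (fun b => b != [::]) (map (@leaves N) ts).
  by rewrite all_map; apply/allP => t _ /=; exact: leaves_nonempty.
have Hs : size u != 1%N.
  have := size_flatten_ge Hne'; rewrite Hf size_map => H.
  by apply/eqP => E; move: (leq_trans Hts2 H); rewrite E.
rewrite enumR_S //; apply/flatten_mapP.
have HIP : map (@leaves N) ts \in interval_partitions u.
  exact: IP_mem2.
exists (map (@leaves N) ts); first by rewrite mem_filter size_map Hts2.
have Hsz : size (map (@root_color N) ts) == size (map (@leaves N) ts) by rewrite !size_map.
apply/flatten_mapP; exists (Tuple Hsz); first by rewrite mem_enum.
apply: map_f; rewrite mem_cart all2_map_r /=.
rewrite (@eq_in_all2 _ _ _ (fun t p => inRTb p.1 p.2 t)); last first.
  move=> a p /mem_zip2 Hp; apply/idP/idP; first exact: enumR_sound.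
  apply: IH; rewrite -ltnS; apply: leq_trans Hsu.
  by rewrite -Hf; apply: size_block_lt => //; rewrite size_map.
by rewrite all2_zipE ?size_map // !eqxx Hall.
Qed.

Lemma enumR_uniq n c u : uniq (enumR n c u).
Proof.
elim: n c u => [|n IH] c u //.
case: (eqVneq (size u) 1%N) => Hs.
  by case: u Hs => [|x [|y u]] // _; rewrite enumR_1; case: ifP.
rewrite enumR_S //.
apply: (@uniq_flatten_key _ _ _ _ _ id (fun t => let: Node _ ts := t in map (@leaves N) ts)).
- by rewrite map_id filter_uniq // IP_uniq.
- move=> bs _.
  apply: (@uniq_flatten_key _ _ _ _ _ val (fun t => let: Node _ ts := t in map (@root_color N) ts)).
  + by rewrite map_inj_uniq ?enum_uniq //; exact: val_inj.
  + move=> v _; rewrite map_inj_uniq; last by move=> a b [].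
    by apply: uniq_cart => L /mapP [p _ ->].
  + move=> v z _ /mapP [ts Hts ->].
    by have /and3P [/eqP -> _ _] := cart_sound (@enumR_sound n) (size_tuple v) Hts.
- move=> bs z _ /flatten_mapP [v _ /mapP [ts Hts ->]].
  by have /and3P [_ /eqP -> _] := cart_sound (@enumR_sound n) (size_tuple v) Hts.
Qed.

End Trees.

Local Open Scope ring_scope.

Section Rec.
Variable N : nat.
Variable K : comPzRingType.
Local Notation Hel := (Hel N K).
Local Notation monomial := (monomial N).
Local Notation ET := (ET N K).
Local Notation One := (@Hone N K).
Local Notation tree := (tree N).

Definition TL (L : seq tree) : ET :=
  flatten [seq ETscale ((-1) ^+ nvert t) (Lambda K t) | t <- L].
Definition Tsum (c : 'I_N) (u : seq 'I_N) : ET := TL (enumR (size u) c u).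

Lemma TLE L w : ETval (TL L) w = \sum_(t <- L) (-1) ^+ nvert t * ETval (Lambda K t) w.
Proof. by rewrite /TL ETval_flatten HsumE big_map; apply: eq_bigr => t _; rewrite ETval_scale. Qed.

Lemma enumR_perm n m (c : 'I_N) u : (size u <= n)%N -> (size u <= m)%N ->
  perm_eq (enumR n c u) (enumR m c u).
Proof.
move=> Hn Hm; apply: uniq_perm; rewrite ?enumR_uniq // => t.
apply/idP/idP => /enumR_sound H; exact: enumR_complete.
Qed.

Lemma TL_perm L1 L2 : perm_eq L1 L2 -> ETval (TL L1) = ETval (TL L2).
Proof. by move=> P; apply: funext => w; rewrite !TLE; apply: perm_big. Qed.

Lemma Tsum_fuel n (c : 'I_N) u : (size u <= n)%N -> ETval (Tsum c u) = ETval (TL (enumR n c u)).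
Proof. by move=> H; apply: TL_perm; apply: enumR_perm. Qed.

Lemma cart_prod (Ls : seq (seq tree)) :
  Hsum (cart Ls) (fun ts => Hscale ((-1) ^+ sumn (map (@nvert N) ts))
                                   (ETval (ETprod (rev (map (Lambda K) ts))))) =
  prodH (rev (map (fun L => ETval (TL L)) Ls)).
Proof.
elim: Ls => [|L Ls IH].
  apply: funext => w; rewrite HsumE big_cons big_nil addr0 /= ETval_one /Hscale.
  by rewrite expr0 mul1r.
rewrite /= rev_cons -cats1 prodH_cat /= Hmul1r.
have -> : ETval (TL L) = Hsum L (fun t => Hscale ((-1) ^+ nvert t) (ETval (Lambda K t))).
  by apply: funext => w; rewrite TLE.
rewrite HmulSr -IH; apply: funext => w.
rewrite HsumE big_allpairs_dep HsumE; apply: eq_bigr => t _.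
rewrite HmulSl HsumE; apply: eq_bigr => ts _.
rewrite HmulZl HmulZr /Hscale /= rev_cons -cats1 ETval_prod map_cat prodH_cat /=.
rewrite Hmul1r -ETval_prod exprD; ring.
Qed.


Lemma Tsum_rec (c : 'I_N) u w : (1 < size u)%N ->
  ETval (Tsum c u) w = - \sum_(bs <- interval_partitions u | (1 < size bs)%N)
     \sum_(v : (size bs).-tuple 'I_N)
       Hmul (ETval (Yterms K c v)) (prodH (rev [seq ETval (Tsum p.1 p.2) | p <- zip (val v) bs])) w.
Proof.
move=> Hu; rewrite {1}/Tsum.
have [n En] : exists n, size u = n.+1 by case: (size u) Hu => // n _; exists n.
have Hs1 : size u != 1%N by rewrite neq_ltn Hu orbT.
rewrite {1}En enumR_S // TLE /enumS big_flatten big_map big_filter -sumrN.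
rewrite big_seq_cond [RHS]big_seq_cond; apply: eq_bigr => bs /andP [HIP Hsz].
rewrite big_flatten /= big_image -sumrN.
apply: eq_big => // v _.
have -> : [seq ETval (Tsum p.1 p.2) | p <- zip (val v) bs] =
    [seq ETval (TL L) | L <- [seq enumR n p.1 p.2 | p <- zip (val v) bs]].
  rewrite -map_comp; apply/eq_in_map => p /mem_zip2 Hp /=; apply: Tsum_fuel.
  have [Hf Hne] := IP_mem1 HIP.
  by rewrite -ltnS -En -Hf; apply: size_block_lt.
rewrite big_map -(cart_prod) HmulSr HsumE -sumrN big_seq; symmetry; rewrite big_seq.
apply: eq_bigr => ts Hts.
have /and3P [/eqP Hr /eqP Hl _] := cart_sound (@enumR_sound N n) (size_tuple v) Hts.
case: ts Hts Hr Hl => [|t ts] Hts Hr Hl; first by exfalso; have := congr1 size Hl; rewrite /= => E; move: Hsz; rewrite -E.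
rewrite /=.
have -> : Yterms K c (root_color t :: [seq root_color i | i <- ts]) = Yterms K c v by rewrite -Hr.
rewrite HmulZr /Hscale ETval_mul exprS; ring.
Qed.

End Rec.


Lemma big_single_seq (R : Type) (idx : R) (op : Monoid.com_law idx) (I : eqType) (r : seq I) (P : pred I) a (F : I -> R) :
  uniq r -> a \in r -> P a -> (forall x, x \in r -> P x -> x = a) ->
  \big[op/idx]_(x <- r | P x) F x = F a.
Proof.
move=> Ur ar Pa H; rewrite -big_filter.
have -> : perm_eq (filter P r) [:: a] -> \big[op/idx]_(x <- filter P r) F x = F a.
  by move=> Pe; rewrite (perm_big _ Pe) big_seq1.
  by [].
apply: uniq_perm; rewrite ?filter_uniq // => x; rewrite mem_filter inE.
apply/andP/eqP => [[Px xr]|->]; [exact: H | by []].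
Qed.

Section Exist.
Variable N : nat.
Variable K : comPzRingType.
Local Notation Hel := (Hel N K).
Local Notation monomial := (monomial N).
Local Notation ET := (ET N K).
Local Notation TT := (TT N K).
Local Notation One := (@Hone N K).
Local Notation tree := (tree N).

Definition Fg (g : gen N) : ET := Tsum K (val g).1 (val g).2.
Definition Fl (m : monomial) : ET := ETprod (rev (map Fg m)).
Definition Fe (m : monomial) : Hel := ETval (Fl m).

Lemma Fe_cat a b : Fe (a ++ b) = Hmul (Fe b) (Fe a).
Proof. by rewrite /Fe /Fl map_cat rev_cat !ETval_prod map_cat prodH_cat. Qed.

Lemma Fe_nil : Fe [::] = One.
Proof. exact: ETval_one. Qed.

Definition FLv (X : ET) : Hel := Hsum X (fun x => Hscale x.1 (Fe x.2)).

Lemma FLv_mul A B : FLv (ETmul A B) = Hmul (FLv B) (FLv A).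
Proof.
apply: funext => w; rewrite /FLv /ETmul HsumE big_allpairs_dep HmulSl HsumE exchange_big.
apply: eq_bigr => x _; rewrite HmulSr HsumE; apply: eq_bigr => y _.
by rewrite /= Fe_cat HmulZl HmulZr /Hscale; ring.
Qed.

Lemma FLv_one : FLv [:: (1, [::])] = One.
Proof. by apply: funext => w; rewrite /FLv HsumE big_seq1 /Hscale /= Fe_nil mul1r. Qed.

Lemma FLv_prod Ls : FLv (ETprod Ls) = prodH (rev (map FLv Ls)).
Proof.
elim: Ls => [|L Ls IH]; first exact: FLv_one.
by rewrite /ETprod /= -/(ETprod Ls) FLv_mul IH rev_cons -cats1 prodH_cat /= Hmul1r.
Qed.

Lemma Tsum_single (c x : 'I_N) : ETval (Tsum K c [:: x]) = if x == c then One else @H0 N K.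
Proof.
apply: funext => w; rewrite /Tsum TLE /= ; case: (x == c).
  by rewrite big_seq1 /= expr0 mul1r ETval_one.
by rewrite big_nil.
Qed.

Lemma FLv_Yterms (c : 'I_N) blk : blk != [::] -> FLv (Yterms K c blk) = ETval (Tsum K c blk).
Proof.
move=> nb; rewrite /Yterms; case: insubP => [g _ Eg|Hng].
  apply: funext => w; rewrite /FLv HsumE big_seq1 /Hscale /= mul1r /Fe /Fl /= ETval_mul ETval_one Hmul1r.
  by rewrite /Fg Eg.
case: blk nb Hng => [|x [|y b]] // _ _; rewrite Tsum_single eqseq_cons andbT.
case: (x == c); first exact: FLv_one.
by apply: funext => w; rewrite /FLv HsumE big_nil.
Qed.

Definition Phi (s : TT) : Hel :=
  Hsum s (fun t => Hscale t.1.1 (Hmul (Hmono K t.2) (Fe t.1.2))).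

Lemma Phi_pair (X Y : ET) :
  Phi [seq (x.1 * y.1, x.2, y.2) | x <- X, y <- Y] = Hmul (ETval Y) (FLv X).
Proof.
apply: funext => w; rewrite /Phi HsumE big_allpairs_dep ETvalE HmulSl HsumE exchange_big.
apply: eq_bigr => y _; rewrite HmulZl /FLv HmulSr /Hscale HsumE mulr_sumr.
apply: eq_bigr => x _; rewrite HmulZr /Hscale /=; ring.
Qed.

Lemma Phi_mul (s t : TT) e : Phi t = Hscale e One -> Phi (TTmul s t) = Hscale e (Phi s).
Proof.
move=> Ht; apply: funext => w.
rewrite /Phi /TTmul HsumE big_allpairs_dep /Hscale HsumE mulr_sumr.
apply: eq_bigr => x _.
have : Hmul (Hmono K x.2) (Hmul (Phi t) (Fe x.1.2)) w = e * Hmul (Hmono K x.2) (Fe x.1.2) w.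
  by rewrite Ht HmulZl Hmul1l HmulZr.
rewrite /Phi HmulSl HmulSr HsumE => E; rewrite mulrCA -E mulr_sumr.
apply: eq_bigr => y _ /=.
rewrite HmulZl HmulZr -Hmul_mono Fe_cat -!HmulA /Hscale; ring.
Qed.


Lemma Yterms_single (c x : 'I_N) : Yterms K c [:: x] = if x == c then [:: (1, [::])] else [::].
Proof. by rewrite /Yterms insubF // eqseq_cons andbT. Qed.

Lemma Phi_gen (g : gen N) : Phi (Delta_gen K g) = @H0 N K.
Proof.
case: g => [[i u] Hu]; apply: funext => w; rewrite /Delta_gen /=.
have Hu' : (1 < size u)%N by [].
rewrite /Phi HsumE big_flatten big_map /H0.
have E1 : forall bs, bs \in interval_partitions u ->
  \sum_(t <- flatten [seq [seq (x.1 * y.1, x.2, y.2)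
                   | x <- ETprod [seq Yterms K p.1 p.2 | p <- zip (val v) bs],
                     y <- Yterms K i v] | v : (size bs).-tuple 'I_N])
     Hscale t.1.1 (Hmul (Hmono K t.2) (Fe t.1.2)) w =
  \sum_(v : (size bs).-tuple 'I_N)
       Hmul (ETval (Yterms K i v)) (prodH (rev [seq ETval (Tsum K p.1 p.2) | p <- zip (val v) bs])) w.
  move=> bs HIP; rewrite big_flatten big_image /=; apply: eq_big => // v _.
  rewrite (_ : \sum_(t <- _) _ = Phi [seq (x.1 * y.1, x.2, y.2)
                   | x <- ETprod [seq Yterms K p.1 p.2 | p <- zip (val v) bs],
                     y <- Yterms K i v] w) //.
  rewrite Phi_pair FLv_prod -map_comp.
  congr (Hmul _ (prodH (rev _)) w); apply/eq_in_map => p /mem_zip2 Hp /=.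
  apply: FLv_Yterms; have [_ /allP] := IP_mem1 HIP; exact.
rewrite big_seq (eq_bigr _ (fun bs H => E1 bs H)) -big_seq {E1}.
rewrite (bigID (fun bs => 1 < size bs)%N) /=.
have -> : \sum_(bs <- interval_partitions u | (1 < size bs)%N)
   \sum_(v : (size bs).-tuple 'I_N)
       Hmul (ETval (Yterms K i v)) (prodH (rev [seq ETval (Tsum K p.1 p.2) | p <- zip (val v) bs])) w
   = - ETval (Tsum K i u) w by rewrite Tsum_rec // opprK.
rewrite (@big_single_seq _ _ _ _ _ _ [:: u]); first last.
- move=> x /IP_mem1 [Hf Hne] Hx.
  case: x Hf Hne Hx => [|b [|b' x]] //=; first by move=> Hf; move: Hu'; rewrite -Hf.
  by rewrite cats0 => ->.
- by [].
- by apply: IP_mem2; rewrite /= ?cats0 // andbT; case: u Hu Hu'.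
- exact: IP_uniq.
rewrite (bigD1 [tuple i]) //= big1 ?addr0.
  rewrite Yterms_single eqxx ETval_one Hmul1l Hmul1r; exact: addNr.
move=> [[|x [|y s]] Hs] //= Hne.
rewrite Yterms_single; case: (eqVneq x i) => [E|_].
  by subst x; exfalso; move/eqP: Hne; apply; apply: val_inj.
by rewrite /Hmul big1 // => k _; rewrite /ETval big_nil mul0r.
Qed.

Lemma Phi_Delta (m : monomial) : Phi (Delta K m) = Hscale (eps K m) One.
Proof.
elim: m => [|g m IH].
  apply: funext => w; rewrite /Phi HsumE big_seq1 /Hscale /= Fe_nil /eps /= mul1r.
  have -> : Hmono K [::] = One by apply: funext => v.
  by rewrite Hmul1l mul1r.
rewrite /Delta /= -/(Delta K m) (Phi_mul _ IH) Phi_gen.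
by apply: funext => w; rewrite /Hscale /H0 /eps /= !mul0r mulr0.
Qed.

End Exist.


Lemma cat_nilE (T : eqType) (a b : seq T) : (a ++ b == [::]) = (a == [::]) && (b == [::]).
Proof. by case: a. Qed.

Lemma flatten_nil (A : Type) (B : Type) (F : A -> seq B) s :
  (forall x, List.In x s -> F x = [::]) -> flatten (map F s) = [::].
Proof. elim: s => [|x s IH] //= H; rewrite H /=; [apply: IH => y Hy | ]; by [apply: H; right | left]. Qed.

Lemma inP_list (T : eqType) (x : T) s : reflect (List.In x s) (x \in s).
Proof.
elim: s => [|y s IH] /=; first by constructor.
rewrite inE; apply: (iffP orP) => [[/eqP ->|/IH]|[->|/IH]]; by [left | right].
Qed.

Lemma flatten_single (A : eqType) (B : Type) (F : A -> seq B) s a :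
  uniq s -> a \in s -> (forall x, x \in s -> x != a -> F x = [::]) ->
  flatten (map F s) = F a.
Proof.
elim: s => [|x s IH] //= /andP [xs Us]; rewrite inE => /orP [/eqP E|As] H.
  subst x; rewrite flatten_nil ?cats0 // => y /inP_list Hy; apply: H; first by rewrite inE Hy orbT.
  by apply: contraNneq xs => <-.
rewrite H ?mem_head //=; first by apply: IH => // y Hy; apply: H; rewrite inE Hy orbT.
by apply: contraNneq xs => ->.
Qed.

Section Uniq.
Variable N : nat.
Variable K : comPzRingType.
Local Notation Hel := (Hel N K).
Local Notation monomial := (monomial N).
Local Notation ET := (ET N K).
Local Notation TT := (TT N K).
Local Notation One := (@Hone N K).
Local Notation tree := (tree N).

Lemma filter_TTmul (s t : TT) :
  [seq z <- TTmul s t | z.2 == [::]] = TTmul [seq z <- s | z.2 == [::]] [seq z <- t | z.2 == [::]].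
Proof.
elim: s => [|x s IH] //=; rewrite filter_cat IH filter_map /=.
case: (eqVneq x.2 [::]) => [E|E] /=.
  congr (_ ++ _); congr map; apply: eq_filter => y /=; by rewrite cat_nilE E.
rewrite (@eq_filter _ _ pred0); first by rewrite filter_pred0.
by move=> y /=; rewrite cat_nilE (negbTE E).
Qed.

Lemma Yterms_filter (c : 'I_N) v :
  [seq y <- Yterms K c v | y.2 == [::]] = if v == [:: c] then [:: (1, [::])] else [::].
Proof.
rewrite /Yterms; case: insubP => [g Hg _|Hng] /=.
  by case: v Hg => [|x [|y v]] //= _; rewrite eqseq_cons andbF.
by case: ifP.
Qed.

Lemma filter_gen (g : gen N) : [seq z <- Delta_gen K g | z.2 == [::]] = [:: (1, [:: g], [::])].
Proof.
case: g => [[i u] Hu]; rewrite /Delta_gen /= filter_flatten -map_comp.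
have Hu' : (1 < size u)%N by [].
rewrite (@flatten_single _ _ _ _ [:: u]).
- rewrite /= filter_flatten -map_comp.
  rewrite (@flatten_single _ _ _ _ [tuple i]) ?enum_uniq ?mem_enum //=.
    rewrite Yterms_single eqxx /Yterms (@insubT _ _ (gen N) (i, u) Hu) /=.
    by rewrite !mulr1.
  move=> v _ Hv; rewrite /= (_ : [seq z <- _ | _] = [::]) //.
  elim: (ETprod _) => [|x X IH] //=; rewrite filter_cat IH cats0 filter_map.
  rewrite (eq_filter (a2 := fun y => y.2 == [::])) // Yterms_filter.
  case: (eqVneq (val v) [:: i]) => [E|] //; exfalso; move/eqP: Hv; apply; exact: val_inj.
- exact: IP_uniq.
- by apply: IP_mem2; rewrite /= ?cats0 // andbT; case: u Hu Hu'.
move=> bs HIP Hne /=; rewrite filter_flatten -map_comp; apply: flatten_nil => v _ /=.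
elim: (ETprod _) => [|x X IH] //=; rewrite filter_cat IH cats0 filter_map.
rewrite (eq_filter (a2 := fun y => y.2 == [::])) // Yterms_filter.
case: (eqVneq (val v) [:: i]) => [E|] //; exfalso.
have := size_tuple v; rewrite E /=.
have [Hf _] := IP_mem1 HIP.
move: Hne Hf; clear; case: bs => [|b [|b' bs]] //= Hne Hf _.
by move/eqP: Hne; apply; rewrite -Hf cats0.
Qed.

Lemma filter_Delta (m : monomial) : [seq t <- Delta K m | t.2 == [::]] = [:: (1, m, [::])].
Proof.
elim: m => [|g m IH] //; rewrite /Delta /= -/(Delta K m) filter_TTmul IH filter_gen /=.
by rewrite /TTmul /= mulr1.
Qed.


Definition wt (m : monomial) : nat := sumn [seq (size (val g).2).-1 | g <- m].

Lemma wt_cat a b : wt (a ++ b) = (wt a + wt b)%N.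
Proof. by rewrite /wt map_cat sumn_cat. Qed.

Lemma wt_Yterms (c : 'I_N) b a : b != [::] -> a \in Yterms K c b -> (wt a.2 + 1)%N = size b.
Proof.
move=> nb; rewrite /Yterms; case: insubP => [g Hg Eg|Hng].
  rewrite inE => /eqP -> /=; rewrite /wt /= Eg /= addn0 addn1 prednK //.
  by case: b nb {Hg Eg}.
case: ifP => [/eqP E|_] //; rewrite inE => /eqP ->; by rewrite E.
Qed.

Lemma wt_prod (bs : seq (seq 'I_N)) (v : seq 'I_N) x :
  size v = size bs -> all (fun b => b != [::]) bs ->
  x \in ETprod [seq Yterms K p.1 p.2 | p <- zip v bs] ->
  (wt x.2 + size bs)%N = sumn (map size bs).
Proof.
elim: bs v x => [|b bs IH] [|c v] x //=.
  by rewrite inE => _ _ /eqP ->.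
case=> Ev /andP [nb Hne]; rewrite /ETprod /= -/(ETprod _).
case/allpairsP => [[a r] [Ha Hr ->]] /=.
rewrite wt_cat -(wt_Yterms nb Ha) -(IH v r Ev Hne Hr) /=.
by rewrite addn1 addSn addnS !addnA.
Qed.

Lemma Yterms_nonnil (c : 'I_N) v y : y \in Yterms K c v -> y.2 != [::] -> (1 < size v)%N.
Proof.
rewrite /Yterms; case: insubP => [g Hg Eg|Hng] //.
by case: ifP => _; rewrite ?inE // => /eqP ->.
Qed.

Lemma wt_gen (g : gen N) t : t \in Delta_gen K g -> (wt t.1.2 + (t.2 != [::]) <= wt [:: g])%N.
Proof.
case: g => [[i u] Hu]; rewrite /Delta_gen /=.
case/flatten_mapP => bs HIP /flatten_mapP [v _ /allpairsP [[x y] [Hx Hy ->]]] /=.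
have [Hf Hne] := IP_mem1 HIP.
have E := wt_prod (size_tuple v) Hne Hx.
rewrite -/(shape bs) -size_flatten Hf in E.
have H1 : y.2 != [::] -> (1 < size bs)%N by move=> /(Yterms_nonnil Hy); rewrite size_tuple.
have H0 : (0 < size bs)%N.
  by case: bs Hf {HIP Hne E H1 v Hx Hy} => //= Hf; move: Hu; rewrite -Hf.
rewrite /wt /= addn0 -/(wt _).
move: E H1 H0; case: (y.2 != [::]); move: (wt _) (size bs) (size u) => p q r; lia.
Qed.

Lemma wt_Delta (m : monomial) t : t \in Delta K m -> (wt t.1.2 + (t.2 != [::]) <= wt m)%N.
Proof.
elim: m t => [|g m IH] t.
  by rewrite inE => /eqP ->.
rewrite /Delta /= -/(Delta K m) => /allpairsP [[x y] [Hx Hy ->]] /=.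
have := wt_gen Hx; have := IH _ Hy.
rewrite wt_cat (wt_cat [:: g] m) cat_nilE.
case: (x.2 == [::]); case: (y.2 == [::]); move: (wt x.1.2) (wt y.1.2) (wt [:: g]) (wt m) => p q r s /=; lia.
Qed.

Lemma S_unique (S : monomial -> Hel) : is_antipode_L S -> forall m, S m = Fe K m.
Proof.
move=> HS.
suff H : forall n m, (wt m < n)%N -> S m = Fe K m by move=> m; apply: (H (wt m).+1).
elim=> [|n IH] m Hm //; apply: funext => w.
have [_ A] := HS m w.
have B := congr1 (fun f => f w) (Phi_Delta K m).
rewrite /Phi HsumE /Hscale in B.
rewrite (bigID (fun t => t.2 == [::])) /= -big_filter filter_Delta big_seq1 /= in A.
rewrite (bigID (fun t => t.2 == [::])) /= -big_filter filter_Delta big_seq1 /= in B.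
have Hm1 : Hmono K [::] = One by apply: funext => v.
rewrite Hm1 Hmul1l mul1r in A; rewrite Hm1 Hmul1l mul1r in B.
rewrite big_seq_cond in A; rewrite big_seq_cond in B.
rewrite (eq_bigr (fun t => t.1.1 * Hmul (Hmono K t.2) (Fe K t.1.2) w)) in A; last first.
  move=> t /andP [Ht Hne]; rewrite IH //.
  have := wt_Delta Ht; rewrite Hne addn1 => H; exact: leq_trans H Hm.
by apply: (addIr (\sum_(i <- Delta K m | (i \in Delta K m) && (i.2 != [::])) i.1.1 * Hmul (Hmono K i.2) (Fe K i.1.2) w)); rewrite A B.
Qed.

End Uniq.



Lemma NoDup_uniq (T : eqType) (l : seq T) : List.NoDup l -> uniq l.
Proof.
elim: l => [|x l IH] //= /List.NoDup_cons_iff [Hx Hl].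
by rewrite IH // andbT; apply/negP => /inP_list.
Qed.

Lemma main_generic (K : comPzRingType) (N : nat) (i : 'I_N)
  (u : seq 'I_N) (Hu : (2 <= size u)%N) (S : monomial N -> Hel N K) :
  is_antipode_L S ->
  forall l : list (tree N), List.NoDup l -> (forall T, List.In T l <-> inRT i u T) ->
  forall w : monomial N,
    S [:: exist _ (i, u) Hu] w =
    \sum_(T <- l) (-1) ^+ nvert T * ETval (Lambda K T) w.
Proof.
move=> HS l Hnd Hl w.
rewrite (S_unique HS) /Fe /Fl /= ETval_mul ETval_one Hmul1r /Fg /Tsum TLE.
apply: perm_big; apply: uniq_perm; rewrite ?enumR_uniq ?NoDup_uniq // => t.
apply/idP/idP => [/enumR_sound /inRTbP /Hl /inP_list //|/inP_list /Hl /inRTbP H].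
exact: enumR_complete.
Qed.

Unset Implicit Arguments.

Theorem theorem7 (R : realType) (N : nat) (HN : (0 < N)%N) (i : 'I_N)
  (u : seq 'I_N) (Hu : (2 <= size u)%N)
  (S : monomial N -> Hel N R[i]) :
  is_antipode_L S ->
  forall l : list (tree N), List.NoDup l -> (forall T, List.In T l <-> inRT i u T) ->
  forall w : monomial N,
    S [:: exist _ (i, u) Hu] w =
    \sum_(T <- l) (-1) ^+ nvert T * ETval (Lambda R[i] T) w.
Proof. exact: main_generic. Qed.
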